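(* Let $q$ be a probability measure on $(0,\infty)$ (absolutely continuous part plus finitely many atoms, finite mean), $r^\star>0$, $\mathcal C_1=(0,r^\star]$, $\mathcal C_2=(r^\star,\infty)$, $p^i=q(\mathcal C_i)>0$, and $q^i(I)=q(I\cap\mathcal C_i)/p^i$ for $i=1,2$. Let $d>0$, write $\hat\nu(d)=\int e^{-dr}\nu(dr)$, and define $$\pi^i=p^i\frac{1-\hat q^i(d)}{1-\hat q(d)},\qquad \mu^{\rm in}=\frac{d}{1-\hat q(d)},\qquad \mu^{{\rm in},i}=\frac{d}{1-\hat q^i(d)}\quad(i=1,2).$$ Then $\pi^1\le p^1$, $\pi^2\ge p^2$, and $\mu^{{\rm in},2}\le\mu^{\rm in}\le\mu^{{\rm in},1}$. *)

(* Defs.v *)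
From HB Require Import structures.
From mathcomp Require Import all_boot all_order all_algebra.
From mathcomp Require Import all_classical all_reals all_analysis.
Set Implicit Arguments. Unset Strict Implicit. Unset Printing Implicit Defensive.
Import Order.TTheory GRing.Theory Num.Theory.
Local Open Scope classical_set_scope.
Local Open Scope ring_scope.

Definition C1 {R : realType} (rs : R) : set R := [set x | 0 < x <= rs].
Definition C2 {R : realType} (rs : R) : set R := [set x | rs < x].

Definition laplace_on {R : realType} (nu : {measure set R -> \bar R})
  (D : set R) (d : R) : R := Rintegral nu D (fun r => expR (- (d * r))).

Definition qhat {R : realType} (q : probability R R) (d : R) : R :=
  laplace_on q setT d.

Definition pcl {R : realType} (q : probability R R) (C : set R) : R := fine (q C).

(* Laplace transform of q^i = q(. /\ C_i)/p^i :
   hat q^i(d) = (1/p^i) \int_{C_i} e^{-dr} q(dr) *)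
Definition qhat_cl {R : realType} (q : probability R R) (C : set R) (d : R) : R :=
  laplace_on q C d / pcl q C.

Definition ac_plus_atoms {R : realType} (q : probability R R) : Prop :=
  exists (f : R -> R) (s : seq (R * R)),
    measurable_fun setT f /\ (forall x, 0 <= f x) /\ all (fun a => 0 <= a.2) s /\
    forall A : set R, measurable A ->
      q A = (\int[lebesgue_measure]_(x in A) (f x)%:E +
             \sum_(a <- s) (a.2)%:E * \d_(a.1) A)%E.

(* Main.v *)
Require Import Defs.
From HB Require Import structures.
From mathcomp Require Import all_boot all_order all_algebra.
From mathcomp Require Import all_classical all_reals all_analysis.
From mathcomp Require Import measurable_realfun.
Import Order.TTheory GRing.Theory Num.Theory.
Local Open Scope classical_set_scope.
Local Open Scope ring_scope.
From mathcomp Require Import measurable_realfun.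
From mathcomp Require Import ring lra.
Lemma mg (R : realType) (d : R) (D : set R) :
  measurable_fun D (fun x : R => (expR (- (d * x)))%:E).
Proof.
apply/measurable_EFinP.
apply: measurableT_comp; first exact: measurable_expR.
by apply: measurableT_comp.
Qed.

Lemma int_le (R : realType) (q : probability R R) (d c : R) (D : set R) :
  measurable D -> (forall x, D x -> expR (- (d * x)) <= c) ->
  (\int[q]_(x in D) (expR (- (d * x)))%:E <= c%:E * q D)%E.
Proof.
move=> mD h.
rewrite -integral_cst //.
apply: ge0_le_integral => //; first exact: mg.
Qed.

Lemma int_ge (R : realType) (q : probability R R) (d c : R) (D : set R) :
  measurable D -> 0 <= c -> (forall x, D x -> c <= expR (- (d * x))) ->
  (c%:E * q D <= \int[q]_(x in D) (expR (- (d * x)))%:E)%E.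
Proof.
move=> mD c0 h.
rewrite -integral_cst //.
apply: ge0_le_integral => //; exact: mg.
Qed.
Lemma divle (R : realType) (d x y : R) : 0 < d -> 0 < y -> y <= x -> d / x <= d / y.
Proof.
move=> hd hy hyx.
rewrite ler_pM2l // lef_pV2 ?posrE //.
exact: lt_le_trans hyx.
Qed.

Lemma arith (R : realType) (p1 p2 l1 l2 c d : R) :
  0 < p1 -> 0 < p2 -> p1 + p2 = 1 -> 0 <= l2 -> l2 <= c * p2 -> c * p1 <= l1 ->
  l1 < p1 -> 0 < c -> 0 < d ->
  [/\ p1 * (1 - l1 / p1) / (1 - (l1 + l2)) <= p1,
      p2 <= p2 * (1 - l2 / p2) / (1 - (l1 + l2)) &
      d / (1 - l2 / p2) <= d / (1 - (l1 + l2)) <= d / (1 - l1 / p1)].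
Proof.
move=> hp1 hp2 hs hl2 h2 h1 hl1 hc hd.
have key : p1 * l2 <= l1 * p2 by nra.
have lc : l2 < p2 by nra.
have hD : 0 < 1 - (l1 + l2) by lra.
have e1 : p1 * (1 - l1 / p1) = p1 - l1 by field; rewrite gt_eqF.
have e2 : p2 * (1 - l2 / p2) = p2 - l2 by field; rewrite gt_eqF.
have f1 : 1 - l1 / p1 = (p1 - l1) / p1 by field; rewrite gt_eqF.
have f2 : 1 - l2 / p2 = (p2 - l2) / p2 by field; rewrite gt_eqF.
have k1 : p1 - l1 <= p1 * (1 - (l1 + l2)) by nra.
have k2 : p2 * (1 - (l1 + l2)) <= p2 - l2 by nra.
split.
- by rewrite e1 ler_pdivrMr // mulrC.
- by rewrite e2 ler_pdivlMr // mulrC.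
- apply/andP; split; apply: divle => //.
  + by rewrite f2 ler_pdivlMr // mulrC.
  + by rewrite f1 divr_gt0 // subr_gt0.
  + by rewrite f1 ler_pdivrMr // mulrC.
Qed.

Lemma mset_itv (R : realType) (P : R -> bool) (i : interval R) :
  (forall x, P x = (x \in i)) -> measurable [set x | P x].
Proof.
move=> h.
have -> : [set x | P x] = [set` i] by apply/seteqP; split=> x /=; rewrite h.
exact: measurable_itv.
Qed.

Lemma fin_of (R : realType) (x m : \bar R) (c : R) :
  (0 <= x)%E -> (x <= c%:E * m)%E -> m \is a fin_num -> x \is a fin_num.
Proof.
move=> x0 hx hm.
have : (c%:E * m)%E \is a fin_num by rewrite fin_numM.
rewrite fin_numElt => /andP[_ h].
rewrite ge0_fin_numE //; exact: le_lt_trans hx h.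
Qed.
Arguments fin_of {R x m c}.

Theorem corollary2p9 (R : realType) (q : probability R R) (rs d : R)
  (hq0 : q [set x | x <= 0] = 0%E)
  (hqac : ac_plus_atoms q)
  (hmean : q.-integrable setT (fun x => x%:E))
  (hrs : 0 < rs)
  (hp1 : 0 < pcl q (C1 rs)) (hp2 : 0 < pcl q (C2 rs))
  (hd : 0 < d) :
  let p1 := pcl q (C1 rs) in
  let p2 := pcl q (C2 rs) in
  let pi1 := p1 * (1 - qhat_cl q (C1 rs) d) / (1 - qhat q d) in
  let pi2 := p2 * (1 - qhat_cl q (C2 rs) d) / (1 - qhat q d) in
  let mu_in := d / (1 - qhat q d) in
  let mu_in1 := d / (1 - qhat_cl q (C1 rs) d) in
  let mu_in2 := d / (1 - qhat_cl q (C2 rs) d) in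
  [/\ pi1 <= p1, p2 <= pi2 & mu_in2 <= mu_in <= mu_in1].
Proof.
move=> p1 p2 pi1 pi2 mu_in mu_in1 mu_in2.
have mN : measurable [set x : R | x <= 0].
  by apply: (@mset_itv _ _ `]-oo, 0]) => x; rewrite in_itv.
have mC1 : measurable (C1 rs).
  by apply: (@mset_itv _ _ `]0, rs]) => x; rewrite in_itv.
have mC2 : measurable (C2 rs).
  by apply: (@mset_itv _ _ `]rs, +oo[) => x; rewrite in_itv /= andbT.
have g0 : forall (A : set R) x, A x -> (0 <= (expR (- (d * x)))%:E)%E.
  by move=> A x _; rewrite lee_fin expR_ge0.
have d12 : [disjoint C1 rs & C2 rs].
  apply/eqP; apply/seteqP; split=> x //= [/andP[_ h1] h2].
  by move: (le_lt_trans h1 h2); rewrite ltxx.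
have dN : [disjoint [set x : R | x <= 0] & (C1 rs `|` C2 rs)].
  apply/eqP; apply/seteqP; split=> x //= [h0 [/andP[h1 _]|h2]].
  - by move: (le_lt_trans h0 h1); rewrite ltxx.
  - by move: (le_lt_trans h0 (lt_trans hrs h2)); rewrite ltxx.
have eT : [set: R] = [set x : R | x <= 0] `|` (C1 rs `|` C2 rs).
  apply/seteqP; split=> x // _.
  case: (leP x 0) => hx; [by left|right].
  case: (leP x rs) => hr; [left|right] => //.
  by rewrite /C1 /= hx hr.
have mC12 : measurable (C1 rs `|` C2 rs) by exact: measurableU.
have IT : (\int[q]_(x in setT) (expR (- (d * x)))%:E =
   \int[q]_(x in C1 rs) (expR (- (d * x)))%:E + \int[q]_(x in C2 rs) (expR (- (d * x)))%:E)%E.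
  rewrite eT (ge0_integral_setU _ mN mC12 (mg _ _ _) (g0 _) dN).
  rewrite null_set_integral // ?add0e; last exact: mg.
  exact: (ge0_integral_setU _ mC1 mC2 (mg _ _ _) (g0 _) d12).
have qT : (q (C1 rs) + q (C2 rs) = 1)%E.
  have u1 : q ([set x : R | x <= 0] `|` (C1 rs `|` C2 rs)) =
      (q [set x : R | (x <= 0)%R] + q (C1 rs `|` C2 rs))%E.
    exact: (measureU q mN mC12 (eqP dN)).
  have u2 : q (C1 rs `|` C2 rs) = (q (C1 rs) + q (C2 rs))%E.
    exact: (measureU q mC1 mC2 (eqP d12)).
  by rewrite -(probability_setT q) eT u1 u2 hq0 add0e.
have mB : forall e : R, measurable [set x : R | e <= x <= rs].
  by move=> e; apply: (@mset_itv _ _ `[e, rs]) => x; rewrite in_itv.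
have [e [e0 hB]] : exists e : R, 0 < e /\ (0 < q [set x : R | (e <= x <= rs)%R])%E.
  apply: contrapT => /forallNP hn.
  have h0 : forall n : nat, q [set x : R | (n.+1%:R^-1 <= x <= rs)%R] = 0%E.
    move=> n; have /not_andP [] := hn n.+1%:R^-1.
      by rewrite invr_gt0 ltr0Sn.
    move=> h; apply/eqP; rewrite eq_le measure_ge0 andbT leNgt; exact/negP.
  have : q.-negligible (C1 rs).
    have hU : q.-negligible (\bigcup_n [set x : R | n.+1%:R^-1 <= x <= rs]).
      by apply: negligible_bigcup => n; apply/(negligibleP _ (mB _)); exact: h0.
    apply: negligibleS hU.
    move=> x /= /andP [x0 xr]; exists (Num.truncn x^-1) => //=.
    rewrite xr andbT.
    rewrite -[X in _ <= X]invrK; apply: ltW; rewrite ltf_pV2 ?posrE ?invr_gt0 //.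
    exact: truncnS_gt.
  move/(negligibleP _ mC1) => hC1.
  by move: hp1; rewrite /pcl hC1 /= ltxx.
set B := [set x : R | (e <= x <= rs)%R].
have BC1 : B `<=` C1 rs.
  move=> x /andP [ex xr]; rewrite /C1 /= xr andbT; exact: lt_le_trans e0 ex.
have mA : measurable (C1 rs `\` B) by apply: measurableD => //; exact: mB.
have mB' : measurable B by exact: mB.
have dBA : [disjoint B & C1 rs `\` B] by apply/eqP; exact: setDIK.
have IC1 : (\int[q]_(x in C1 rs) (expR (- (d * x)))%:E =
    \int[q]_(x in B) (expR (- (d * x)))%:E + \int[q]_(x in C1 rs `\` B) (expR (- (d * x)))%:E)%E.
  have := ge0_integral_setU q mB' mA (mg _ _ _) (g0 _) dBA.
  by rewrite setDUK.
have qC1 : q (C1 rs) = (q B + q (C1 rs `\` B))%E.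
  have := measureU q mB' mA (eqP dBA).
  by rewrite setDUK.
have hBle : (\int[q]_(x in B) (expR (- (d * x)))%:E <= (expR (- (d * e)))%:E * q B)%E.
  apply: int_le => // x /andP [ex _].
  by rewrite ler_expR lerN2 ler_pM2l.
have hAle : (\int[q]_(x in C1 rs `\` B) (expR (- (d * x)))%:E <= 1%:E * q (C1 rs `\` B))%E.
  apply: int_le => // x [/andP [x0 _] _].
  by rewrite expR_le1 oppr_le0 mulr_ge0 // ltW.
have hC1ge : ((expR (- (d * rs)))%:E * q (C1 rs) <= \int[q]_(x in C1 rs) (expR (- (d * x)))%:E)%E.
  apply: int_ge => //; try exact: expR_ge0.
  move=> x /andP [_ xr].
  by rewrite ler_expR lerN2 ler_pM2l.
have hC2le : (\int[q]_(x in C2 rs) (expR (- (d * x)))%:E <= (expR (- (d * rs)))%:E * q (C2 rs))%E.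
  apply: int_le => // x xr.
  by rewrite ler_expR lerN2 ler_pM2l // ltW.
have fB := fin_num_measure q B mB'.
have fA := fin_num_measure q _ mA.
have f1 := fin_num_measure q _ mC1.
have f2 := fin_num_measure q _ mC2.
have fIB := fin_of (integral_ge0 q (g0 _)) hBle fB.
have fIA := fin_of (integral_ge0 q (g0 _)) hAle fA.
have fI2 := fin_of (integral_ge0 q (g0 _)) hC2le f2.
have I20 := integral_ge0 q (g0 (C2 rs)).
have fI1 : (\int[q]_(x in C1 rs) (expR (- (d * x)))%:E)%E \is a fin_num.
  by rewrite IC1 fin_numD fIB fIA.
move: hp1 hp2 IT IC1 qC1 hBle hAle hC1ge hC2le qT hB I20.
rewrite /pi1 /pi2 /mu_in /mu_in1 /mu_in2 /p1 /p2 /qhat_cl /qhat /laplace_on /Rintegral /pcl.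
rewrite -(fineK fB) -(fineK fA) -(fineK f1) -(fineK f2) -(fineK fIB) -(fineK fIA) -(fineK fI1) -(fineK fI2).
move=> hp1 hp2 -> IC1 qC1 hBle hAle hC1ge hC2le qT hB I20.
move: IC1 qC1 hBle hAle hC1ge hC2le qT hB I20 hp1 hp2.
move: (fine (q B)) => a.
move: (fine (q (C1 rs `\` B))) => b.
move: (fine (q (C1 rs))) => p1'.
move: (fine (q (C2 rs))) => p2'.
move: (fine (\int[q]_(x in B) (expR (- (d * x)))%:E)) => lB.
move: (fine (\int[q]_(x in C1 rs `\` B) (expR (- (d * x)))%:E)) => lA.
move: (fine (\int[q]_(x in C1 rs) (expR (- (d * x)))%:E)) => l1.
move: (fine (\int[q]_(x in C2 rs) (expR (- (d * x)))%:E)) => l2.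
rewrite -!EFinD -!EFinM !lee_fin lte_fin /=.
move=> [] IC1 [] qC1 hBle hAle hC1ge hC2le [] qT hB I20 hp1 hp2.
have ce1 : expR (- (d * e)) < 1 by rewrite expR_lt1 oppr_lt0 mulr_gt0.
have ce0 := expR_gt0 (- (d * e)).
have hl1 : l1 < p1' by nra.
apply: (@arith R p1' p2' l1 l2 (expR (- (d * rs))) d) => //; exact: expR_gt0.
Qed.
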